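(* Let $d\ge 1$, $\sigma>0$, and let $A_0,A_1\in\mathbb{R}^{d\times d}$ be constant matrices (not assumed to commute). Then the function $Z$ defined in the context (restricted to $[-\sigma,\infty)$) is the unique solution of the initial value problem \[ \dot Z(\vartheta)=A_0Z(\vartheta-\sigma)+Z(\vartheta-\sigma)A_1,\ \ \vartheta\in[0,\infty),\qquad Z(\vartheta)=I,\ \ \vartheta\in[-\sigma,0]. \]
   Context: $\Theta$ and $I$ denote the $d\times d$ zero and identity matrices. Define matrices $Q_{r+1}(r\sigma)$, $r=0,1,2,\dots$, recursively by $Q_1(0)=I$ and $Q_{r+1}(r\sigma)=A_0Q_r((r-1)\sigma)+Q_r((r-1)\sigma)A_1$ for $r\ge 1$. Define $Z:\mathbb{R}\to\mathbb{R}^{d\times d}$ by $Z(\vartheta)=\Theta$ for $\vartheta<-\sigma$, and, for each integer $u\ge 0$ and $\vartheta\in[(u-1)\sigma,u\sigma)$, \[ Z(\vartheta)=\sum_{r=0}^{u}Q_{r+1}(r\sigma)\frac{(\vartheta-(r-1)\sigma)^r}{r!}. \] *)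

(* Defs.v *)
From HB Require Import structures.
From mathcomp Require Import all_boot all_order all_algebra.
From mathcomp Require Import all_classical all_reals all_analysis.
Set Implicit Arguments. Unset Strict Implicit. Unset Printing Implicit Defensive.
Import Order.TTheory GRing.Theory Num.Theory.
Import numFieldNormedType.Exports.
Local Open Scope classical_set_scope.
Local Open Scope ring_scope.

(* Q r stands for Q_{r+1}(r sigma): Q_1(0) = I,
   Q_{r+1}(r sigma) = A0 Q_r((r-1)sigma) + Q_r((r-1)sigma) A1. *)
Fixpoint Qmx (R : realType) (d : nat) (A0 A1 : 'M[R]_d) (r : nat) : 'M[R]_d :=
  match r with
  | 0%N => 1%:M
  | r'.+1 => A0 *m Qmx A0 A1 r' + Qmx A0 A1 r' *m A1
  end.

Definition Zmx (R : realType) (d : nat) (sigma : R) (A0 A1 : 'M[R]_d) (t : R)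
  : 'M[R]_d :=
  if t < - sigma then 0
  else let u := absz (Num.floor (t / sigma) + 1) in
       \sum_(r < u.+1)
         (((t - (r%:R - 1) * sigma) ^+ r) / (r`!)%:R) *: Qmx A0 A1 r.

(* With D = [0, +oo) this is the usual derivative for t > 0 and the
   right derivative at t = 0. *)
Definition is_deriv_within (R : realType) (V : normedModType R)
  (D : set R) (f : R -> V) (t : R) (f' : V) : Prop :=
  (fun h : R => h^-1 *: (f (t + h) - f t))
    @ within (fun h : R => h != 0 /\ D (t + h)) (nbhs (0 : R)) --> f'.

Definition solves_IVP (R : realType) (d : nat) (sigma : R) (A0 A1 : 'M[R]_d)
  (X : R -> 'M[R]_d) : Prop :=
  (forall t : R, 0 <= t ->
     is_deriv_within [set s : R | 0 <= s] X t
       (A0 *m X (t - sigma) + X (t - sigma) *m A1)) /\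
  (forall t : R, - sigma <= t <= 0 -> X t = 1%:M).

(* Main.v *)
Require Import Defs.
From HB Require Import structures.
From mathcomp Require Import all_boot all_order all_algebra.
From mathcomp Require Import all_classical all_reals all_analysis.
From mathcomp Require Import ring lra zify.
Import Order.TTheory GRing.Theory Num.Theory.
Import numFieldNormedType.Exports.
Local Open Scope classical_set_scope.
Local Open Scope ring_scope.
Section DW.
Context {R : realType} {V : normedModType R}.
Implicit Types (D : set R) (f g : R -> V).

Lemma dwP D f t L :
  is_deriv_within D f t L <->
  forall e : R, 0 < e -> exists2 d : R, 0 < d & forall h : R, `|h| < d -> h != 0 -> D (t + h) ->
     `|L - h^-1 *: (f (t + h) - f t)| < e.
Proof.
rewrite /is_deriv_within cvgrPdist_lt; split=> H e e0.
  have := H e e0; rewrite near_withinE => /nbhs_normP [d d0 Hd].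
  exists d => // h hd h0 Dh; apply: (Hd h) => //=; by rewrite sub0r normrN.
have [d d0 Hd] := H e e0; rewrite near_withinE; apply/nbhs_normP; exists d => //= h.
rewrite /ball_ /= sub0r normrN => hd [h0 Dh]; exact: Hd.
Qed.

Lemma dw_near D f g t L d : 0 < d -> (forall h, `|h| < d -> f (t + h) = g (t + h)) ->
  is_deriv_within D f t L -> is_deriv_within D g t L.
Proof.
move=> d0 fg /dwP H; apply/dwP => e e0.
have [d' d'0 Hd] := H e e0.
exists (Num.min d d'); first by rewrite lt_min d0 d'0.
move=> h; rewrite lt_min => /andP[hd hd'] h0 Dh.
rewrite -fg // -(addr0 t) -fg ?normr0 // addr0; exact: Hd.
Qed.

Lemma dw_cst D (M : V) t : is_deriv_within D (fun _ => M) t 0.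
Proof.
rewrite /is_deriv_within.
have -> : (fun h : R => h^-1 *: (M - M)) = fun=> 0 by apply/funext => h; rewrite subrr scaler0.
exact: cvg_cst.
Qed.

Lemma dw_add D f g t Lf Lg : is_deriv_within D f t Lf -> is_deriv_within D g t Lg ->
  is_deriv_within D (fun s => f s + g s) t (Lf + Lg).
Proof.
rewrite /is_deriv_within => Hf Hg.
have -> : (fun h : R => h^-1 *: (f (t + h) + g (t + h) - (f t + g t))) =
  (fun h => h^-1 *: (f (t + h) - f t) + h^-1 *: (g (t + h) - g t)).
  by apply/funext => h; rewrite -scalerDr opprD addrACA.
exact: cvgD.
Qed.

Lemma dw_sub D f g t Lf Lg : is_deriv_within D f t Lf -> is_deriv_within D g t Lg ->
  is_deriv_within D (fun s => f s - g s) t (Lf - Lg).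
Proof.
rewrite /is_deriv_within => Hf Hg.
have -> : (fun h : R => h^-1 *: (f (t + h) - g (t + h) - (f t - g t))) =
  (fun h => h^-1 *: (f (t + h) - f t) - h^-1 *: (g (t + h) - g t)).
  by apply/funext => h; rewrite -scalerBr opprD opprK addrACA opprB [g t - _]addrC.
exact: cvgB.
Qed.

Lemma dw_scale D (c : R -> R) (M : V) t l : is_deriv_within D c t l ->
  is_deriv_within D (fun s => c s *: M) t (l *: M).
Proof.
rewrite /is_deriv_within => Hc.
have -> : (fun h : R => h^-1 *: (c (t + h) *: M - c t *: M)) =
  (fun h => (h^-1 *: (c (t + h) - c t)) *: M).
  apply/funext => h; have -> : h^-1 *: (c (t + h) - c t) = h^-1 * (c (t + h) - c t) by [].
  by rewrite -scalerA scalerBl.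
exact: cvgZr_tmp.
Qed.

Lemma dw_sum D n (c : nat -> R -> R) (M : nat -> V) t (l : nat -> R) :
  (forall r, (r < n)%N -> is_deriv_within D (c r) t (l r)) ->
  is_deriv_within D (fun s => \sum_(r < n) c r s *: M r) t (\sum_(r < n) l r *: M r).
Proof.
elim: n => [|n IH] H.
  have -> : (fun s : R => \sum_(r < 0) c r s *: M r) = fun=> 0.
    by apply/funext => s; rewrite big_ord0.
  rewrite big_ord0; exact: dw_cst.
have -> : (fun s : R => \sum_(r < n.+1) c r s *: M r) =
   (fun s => \sum_(r < n) c r s *: M r + c n s *: M n).
  by apply/funext => s; rewrite big_ord_recr.
rewrite big_ord_recr /=; apply: dw_add.
  by apply: IH => r rn; apply: H; apply: ltnW.
by apply: dw_scale; apply: H.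
Qed.

Lemma dw_derive D f (t : R) (L : V) : is_derive t 1 f L -> is_deriv_within D f t L.
Proof.
case=> df <-; move: df; rewrite /derivable /derive => df.
move/cvgrPdist_lt: df => H; apply/dwP => e e0.
have := H e e0; rewrite near_withinE => /nbhs_normP [d d0 Hd].
exists d => // h hd h0 _.
have := Hd h; rewrite /ball_ /= sub0r normrN => /(_ hd h0).
set u := _%:A; have -> : u = h by rewrite /u; exact: mulr1.
by rewrite [h + t]addrC.
Qed.

Lemma dw_interior f (t : R) (L : V) : 0 < t -> is_deriv_within [set s | 0 <= s] f t L -> is_derive t 1 f L.
Proof.
move=> t0 /dwP H.
have HL : (fun h => h^-1 *: ((f \o shift t) (h *: 1) - f t)) @ 0^' --> L.
  apply/cvgrPdist_lt => e e0.
  have [d d0 Hd] := H e e0.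
  rewrite near_withinE; apply/nbhs_normP; exists (Num.min d t); first by rewrite /= lt_min d0 t0.
  move=> h; rewrite /ball_ /= => hh h0; move: hh; rewrite sub0r normrN lt_min => /andP[hd ht].
  rewrite /=; set u := _%:A; have -> : u = h by rewrite /u; exact: mulr1.
  rewrite [h + t]addrC; apply: Hd => //=.
  have : - h <= `|h| by rewrite -normrN ler_norm.
  rewrite /=; lra.
have dv : derivable f t 1 by apply/cvg_ex; exists L.
apply: DeriveDef => //; exact: cvg_lim HL.
Qed.

Lemma dw_cont D f (t : R) (L : V) : is_deriv_within D f t L ->
  forall e : R, 0 < e -> exists2 d : R, 0 < d & forall y, `|t - y| < d -> D y -> `|f t - f y| < e.
Proof.
move=> /dwP H e e0.
have [d d0 Hd] := H 1 ltr01.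
have K0 : 0 < `|L| + 1 by rewrite ltr_wpDl.
exists (Num.min d (e / (`|L| + 1))); first by rewrite lt_min d0 divr_gt0.
move=> y; rewrite lt_min => /andP[yd ye] Dy.
have [->|yt] := eqVneq y t; first by rewrite subrr normr0.
set h := y - t.
have hN : `|h| = `|t - y| by rewrite /h distrC.
have h0 : h != 0 by rewrite /h subr_eq0.
have := Hd h; rewrite hN => /(_ yd h0); rewrite /h addrC subrK => /(_ Dy) Hq.
have E : f y - f t = h *: (h^-1 *: (f y - f t)) by rewrite scalerA mulfV // scale1r.
rewrite distrC E normrZ.
set q := h^-1 *: (f y - f t).
have Hq' : `|q| <= `|L| + 1.
  have E2 : q = L - (L - q) by rewrite opprB addrC subrK.
  rewrite E2; apply: le_trans (ler_normB _ _) _; lra.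
have hK : `|h| * (`|L| + 1) < e by rewrite -ltr_pdivlMr // hN.
have h0' : 0 <= `|h| by [].
have q0' : 0 <= `|q| by [].
nra.
Qed.
End DW.

Section Const.
Context {R : realType}.

Lemma dw_entry m n D (F : R -> 'M[R]_(m, n)) (t : R) (L : 'M[R]_(m, n)) i j :
  is_deriv_within D F t L -> is_deriv_within D (fun s => F s i j) t (L i j).
Proof.
rewrite /is_deriv_within => H.
have -> : (fun h : R => h^-1 *: (F (t + h) i j - F t i j)) =
  (fun M : 'M[R]_(m, n) => M i j) \o (fun h => h^-1 *: (F (t + h) - F t)).
  by apply/funext => h; rewrite /= !mxE.
apply: cvg_comp H _; exact: coord_continuous.
Qed.

Lemma dw_const0 (f : R -> R) (c : R) : 0 < c ->
  (forall s, 0 <= s <= c -> is_deriv_within [set s | 0 <= s] f s 0) -> f c = f 0.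
Proof.
move=> c0 H.
have Hint : forall x, x \in `]0, c[ -> is_derive x 1 f 0.
  move=> x; rewrite in_itv /= => /andP[x0 xc]; apply: dw_interior => //.
  by apply: H; rewrite !ltW.
have df : forall x, x \in `]0, c[ -> derivable f x 1 by move=> x /Hint [].
have d0 : forall x, x \in `]0, c[ -> (f^`())%classic x = 0.
  by move=> x /Hint [_ H']; rewrite derive.derive1E H'.
have cf : {within `[0, c], continuous f}.
  apply/continuous_within_itvP => //; split.
  - move=> x /df /derivable1_diffP; exact: differentiable_continuous.
  - apply/cvgrPdist_lt => e e0.
    have [|d dd0 Hd] := dw_cont _ _ _ _ (H 0 _) _ e0; first by rewrite lexx ltW.
    rewrite near_withinE; apply/nbhs_normP; exists d => // y /= yd y0.
    by apply: Hd => //=; rewrite ltW.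
  - apply/cvgrPdist_lt => e e0.
    have [|d dd0 Hd] := dw_cont _ _ _ _ (H c _) _ e0; first by rewrite lexx ltW.
    rewrite near_withinE; apply/nbhs_normP; exists (Num.min d c); first by rewrite /= lt_min dd0 c0.
    move=> y /=; rewrite /ball_ /= lt_min => /andP[yd yc] y0.
    apply: Hd => //=.
    have : c - y <= `|c - y| by rewrite ler_norm.
    lra.
have h1 := ger0_derive1_le_cc df (fun x hx => ltac:(by rewrite d0)) cf.
have h2 := ler0_derive1_le_cc df (fun x hx => ltac:(by rewrite d0)) cf.
have m0 : 0 \in `[0, c] by rewrite in_itv /= lexx ltW.
have mc : c \in `[0, c] by rewrite in_itv /= lexx ltW.
apply/le_anti/andP; split; [apply: h2 | apply: h1] => //; exact: ltW.
Qed.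
End Const.

Lemma polyd {R : realType} (a c t : R) (r : nat) :
  is_derive t 1 (fun x : R => (x - a) ^+ r * c) ((r%:R * (t - a) ^+ r.-1) * c).
Proof.
have h1 : is_derive t 1 (id - cst a : R -> R) 1.
  by have := is_deriveB (is_derive_id t (1:R)) (is_derive_cst a t (1:R)); rewrite subr0.
have h2 := is_deriveX r h1.
have h3 := is_deriveM h2 (is_derive_cst c t 1).
have -> : (fun x : R => (x - a) ^+ r * c) = ((id - cst a) ^+ r * cst c).
  by apply/funext => x; rewrite !fctE.
apply: (is_derive_eq h3); rewrite scaler0 add0r !fctE /=.
by rewrite scalerA [_%:A]mulr1 mulrC.
Qed.

Lemma small_pow {R : realType} (x k : R) n : 0 <= x -> x <= 1 -> 1 <= k -> x ^+ n.+1 / k <= x.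
Proof.
move=> x0 x1 k1.
have k0 : 0 < k by lra.
rewrite ler_pdivrMr // exprS.
have p1 := exprn_ile1 n x0 x1.
have p0 : 0 <= x ^+ n by rewrite exprn_ge0.
nra.
Qed.

Section Gp.
Context {R : realType} (sigma : R) (hs : 0 < sigma).

Definition gp (r : nat) (s : R) : R :=
  if (r%:R - 1) * sigma <= s then (s - (r%:R - 1) * sigma) ^+ r / (r`!)%:R else 0.

Local Notation D0 := [set s : R | 0 <= s].

Lemma gp0 s : - sigma <= s -> gp 0 s = 1.
Proof. by move=> hs0; rewrite /gp sub0r mulN1r hs0 expr0 fact0 divr1. Qed.

Lemma dw_eqL (V : normedModType R) D (f : R -> V) t L L' :
  L = L' -> is_deriv_within D f t L -> is_deriv_within D f t L'.
Proof. by move=> ->. Qed.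

Lemma dgp0 t : 0 <= t -> is_deriv_within D0 (gp 0) t 0.
Proof.
move=> t0; apply: (@dw_near R R D0 (fun _ => 1) (gp 0) t 0 sigma hs); last exact: dw_cst.
move=> h hh; rewrite gp0 //.
have : - h <= `|h| by rewrite -normrN ler_norm.
lra.
Qed.

Lemma gpS_eq r s : gp r.+1 s =
  if r%:R * sigma <= s then (s - r%:R * sigma) ^+ r.+1 / ((r.+1)`!)%:R else 0.
Proof. by rewrite /gp -natr1 addrK. Qed.

Lemma gp_shift r t : gp r (t - sigma) =
  if r%:R * sigma <= t then (t - r%:R * sigma) ^+ r / (r`!)%:R else 0.
Proof.
rewrite /gp mulrBl mul1r lerD2r opprB addrA.
by rewrite [t - sigma + sigma]subrK.
Qed.

Lemma dgpS r t : 0 <= t -> is_deriv_within D0 (gp r.+1) t (gp r (t - sigma)).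
Proof.
move=> t0; rewrite gp_shift; set a := r%:R * sigma.
have a0 : 0 <= a by rewrite mulr_ge0 // ltW.
have k0 : (r`!)%:R != 0 :> R by rewrite pnatr_eq0 -lt0n fact_gt0.
have k1 : (r.+1)%:R != 0 :> R by rewrite pnatr_eq0.
case: (ltgtP a t) => [lat|lta|eat].
- apply: (@dw_near _ _ D0 (fun s => (s - a) ^+ r.+1 * ((r.+1)`!)%:R^-1) _ t _ (t - a)).
  + by rewrite subr_gt0.
  + move=> h hh; rewrite gpS_eq -/a ifT //.
    have : - h <= `|h| by rewrite -normrN ler_norm.
    lra.
  apply: dw_derive; apply: (is_derive_eq (polyd a _ t r.+1)).
  rewrite factS natrM /=.
  by field; rewrite k0 addrC natr1 k1.
- apply: (@dw_near _ _ D0 (fun _ => 0) _ t _ (a - t)).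
  + by rewrite subr_gt0.
  + move=> h hh; rewrite gpS_eq -/a ifF //.
    apply/negbTE; rewrite -ltNge.
    have : h <= `|h| by rewrite ler_norm.
    lra.
  exact: dw_cst.
- rewrite -eat subrr; apply/dwP => e e0.
  case: r @a a0 k0 k1 eat => [|r] a a0 k0 k1 eat.
  + exists 1 => // h _ h0 /= Dh.
    have a00 : a = 0 by rewrite /a mul0r.
    rewrite !gpS_eq -/a a00 in Dh *; rewrite add0r in Dh *; rewrite Dh lexx /=.
    rewrite !subr0 expr0 expr1 fact0 !divr1 expr1 subr0 /GRing.scale /= mulVf //.
    by rewrite subrr normr0.
  exists (Num.min 1 e); first by rewrite /= lt_min ltr01 e0.
  move=> h; rewrite lt_min => /andP[h1 he] h0 _.
  rewrite !gpS_eq -/a lexx subrr !expr0n /= !mul0r subr0 sub0r normrN.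
  case: ifP => _; last by rewrite scaler0 normr0.
  rewrite [a + h]addrC addrK.
  have -> : h^-1 *: (h ^+ r.+2 / (r.+2)`!%:R) = h ^+ r.+1 / (r.+2)`!%:R.
    by rewrite [h ^+ r.+2]exprS /GRing.scale /= !mulrA mulVf // mul1r.
  rewrite normrM normrX normfV [`|_%:R|]ger0_norm //.
  apply: le_lt_trans he; apply: small_pow => //.
  - exact: ltW.
  - by rewrite ler1n fact_gt0.
Qed.
End Gp.
Section Main.
Context {R : realType} {d : nat} (sigma : R) (hs : 0 < sigma) (A0 A1 : 'M[R]_d).
Local Notation Z := (Zmx sigma A0 A1).
Local Notation Q := (Qmx A0 A1).
Local Notation D0 := [set s : R | 0 <= s].

Lemma Z_repr s N : - sigma <= s -> s < N%:R * sigma ->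
  Z s = \sum_(r < N.+1) gp sigma r s *: Q r.
Proof.
move=> s1 sN; rewrite /Zmx ifF; last by apply/negbTE; rewrite -leNgt.
rewrite /=.
set z := Num.floor (s / sigma).
have zge : -1 <= z by rewrite floor_ge_int ler_pdivlMr // mulN1r.
have fl : z%:~R <= s / sigma by apply: floor_le.
have fu : s / sigma < (z + 1)%:~R by rewrite -floor_lt_int ltzD1.
set u := absz (z + 1).
have uE : u%:R = z%:~R + 1 :> R.
  rewrite /u natr_absz ger0_norm ?intrD //; lia.
have uL : (u%:R - 1) * sigma <= s by rewrite uE addrK -ler_pdivlMr.
have uR : s < u%:R * sigma.
  move: fu; rewrite intrD -uE ltr_pdivrMr //.
have uN : (u <= N)%N.
  rewrite leqNgt; apply/negP => Nu.
  have : (N.+1)%:R <= u%:R :> R by rewrite ler_nat.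
  rewrite -natr1 => HN.
  nra.
rewrite -(big_mkord xpredT (fun r => ((s - (r%:R - 1) * sigma) ^+ r / (r`!)%:R) *: Q r)).
rewrite -(big_mkord xpredT (fun r => gp sigma r s *: Q r)).
rewrite [in RHS](big_cat_nat _ (n := u.+1)) //=.
rewrite [X in _ = _ + X]big_nat_cond [X in _ = _ + X]big1 ?addr0; last first.
  move=> r /andP[/andP[ur _] _]; rewrite /gp ifF ?scale0r //.
  apply/negbTE; rewrite -ltNge.
  have : (u.+1)%:R <= r%:R :> R by rewrite ler_nat.
  rewrite -natr1 => Hr; nra.
apply: eq_big_nat => r /andP[_ ru]; rewrite /gp ifT //.
have : r%:R <= u%:R :> R by rewrite ler_nat.
move=> Hr; nra.
Qed.

Lemma Z_init t : - sigma <= t <= 0 -> Z t = 1%:M.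
Proof.
move=> /andP[t1 t0].
rewrite (@Z_repr t 1) //; last by rewrite mul1r; have := hs; lra.
rewrite !big_ord_recr big_ord0 /= add0r.
rewrite gp0 // scale1r gpS_eq mul0r subr0.
case: ifP => [t0'|_]; last by rewrite scale0r addr0.
have -> : t = 0 by apply/le_anti; rewrite t0 t0'.
by rewrite expr0n /= mul0r scale0r addr0.
Qed.

Lemma Z_deriv t : 0 <= t ->
  is_deriv_within D0 Z t (A0 *m Z (t - sigma) + Z (t - sigma) *m A1).
Proof.
move=> t0; have hs0 := hs.
set N := Num.Def.archi_bound (t / sigma).
have tN : t < N%:R * sigma.
  by rewrite -ltr_pdivrMr //; apply: archi_boundP; rewrite divr_ge0 // ltW.
apply: (@dw_near R _ D0 (fun s => \sum_(r < N.+2) gp sigma r s *: Q r) Z t _ sigma hs).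
  move=> h hh; rewrite (@Z_repr _ N.+1) //.
    have : - h <= `|h| by rewrite -normrN ler_norm.
    lra.
  rewrite -natr1 mulrDl mul1r.
  have : h <= `|h| by rewrite ler_norm.
  lra.
apply: (@dw_eqL R _ _ _ _ (\sum_(r < N.+2)
   (match nat_of_ord r with 0 => 0 | r'.+1 => gp sigma r' (t - sigma) end) *: Q r)).
  rewrite big_ord_recl /= scale0r add0r.
  rewrite (@Z_repr (t - sigma) N); last 2 first.
  - lra.
  - lra.
  rewrite mulmx_sumr mulmx_suml -big_split /=.
  apply: eq_bigr => i _; rewrite !add0n scalerDr.
  by rewrite scalemxAr scalemxAl.
apply: (@dw_sum R _ D0 N.+2 (gp sigma) Q t (fun n => match n with 0 => 0 | r.+1 => gp sigma r (t - sigma) end)).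
move=> r _; case: r => [|r]; [exact: dgp0 | exact: dgpS].
Qed.

Lemma Z_uniq (X : R -> 'M[R]_d) : solves_IVP sigma A0 A1 X ->
  forall n t, - sigma <= t -> t < n%:R * sigma -> X t = Z t.
Proof.
move=> [HX1 HX2]; have hs0 := hs.
elim=> [|n IH] t t1 tn.
  rewrite mul0r in tn; rewrite HX2 ?Z_init // t1 ltW //.
case: (lerP t 0) => [t0|t0].
  by rewrite HX2 ?Z_init // t1 t0.
have HW : forall s, 0 <= s <= t ->
    is_deriv_within D0 (fun s => X s - Z s) s 0.
  move=> s /andP[s0 st].
  eapply dw_eqL; last exact: (dw_sub _ _ _ _ _ _ (HX1 s s0) (@Z_deriv s s0)).
  rewrite IH ?subrr //.
    lra.
  move: tn; rewrite -natr1 mulrDl mul1r; lra.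
apply/matrixP => i j.
have H0 : X 0 = Z 0 by rewrite HX2 ?Z_init // lexx andbT oppr_le0 ltW.
have Hc : (X t - Z t) i j = (X 0 - Z 0) i j.
  apply: (@dw_const0 R (fun s => (X s - Z s) i j) t t0) => s hs'.
  eapply dw_eqL; last exact: (dw_entry _ _ _ _ _ _ i j (HW s hs')).
  by rewrite mxE.
by move: Hc; rewrite H0 subrr !mxE => /eqP; rewrite subr_eq0 => /eqP.
Qed.
End Main.

Theorem theorem2 (R : realType) (d : nat) (hd : (1 <= d)%N) (sigma : R)
  (hsigma : 0 < sigma) (A0 A1 : 'M[R]_d) :
  solves_IVP sigma A0 A1 (Zmx sigma A0 A1) /\
  (forall X : R -> 'M[R]_d, solves_IVP sigma A0 A1 X ->
     forall t : R, - sigma <= t -> X t = Zmx sigma A0 A1 t).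
Proof.
split.
  split; [move=> t t0; exact: (@Z_deriv R d sigma hsigma A0 A1 t t0) | move=> t ht; exact: (@Z_init R d sigma hsigma A0 A1 t ht)].
move=> X HX t t1.
apply: (@Z_uniq R d sigma hsigma A0 A1 X HX (Num.Def.archi_bound ((t + sigma) / sigma))) => //.
have : (t + sigma) / sigma < (Num.Def.archi_bound ((t + sigma) / sigma))%:R.
  apply: archi_boundP; apply: divr_ge0; [lra | exact: ltW].
rewrite ltr_pdivrMr //; lra.
Qed.
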